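(* In the session calculus, strong fairness of actions (SA) is weaker than strong fairness of components (SC): every SC-fair path is SA-fair. Likewise, weak fairness of actions (WA) is weaker than weak fairness of components (WC): every WC-fair path is WA-fair.
   Context: Session calculus: threads $P ::= \mathbf{end} \mid \bigoplus_{i\in I} p_i!\lambda_i;P_i \mid \sum_{i\in I} p_i?\lambda_i;P_i \mid X \mid \mu X.P$ (guarded recursion), thread states additionally $\langle q!\lambda\rangle;P$; networks $p[\![P]\!]\mid 0\mid N\parallel N$ with distinct locations and closed threads, modulo associativity/commutativity/unit. Transitions: (choice) $p[\![\bigoplus_{i\in I}p_i!\lambda_i;P_i]\!]\parallel N \xrightarrow{\tau} p[\![\langle p_k!\lambda_k\rangle;P_k]\!]\parallel N$; (unfold) $p[\![\mu X.P]\!]\parallel N\xrightarrow{\tau} p[\![P\{\mu X.P/X\}]\!]\parallel N$; (comm) $p_k[\![\langle q!\lambda_k\rangle;Q]\!]\parallel q[\![\sum_{i\in I}p_i?\lambda_i;P_i]\!]\parallel N \xrightarrow{(p_k,\lambda_k,q)} p_k[\![Q]\!]\parallel q[\![P_k]\!]\parallel N$. $\mathrm{comp}(t)$ is the moving location for a $\tau$-transition and $\{p,q\}$ for label $(p,\lambda,q)$. A path is a network state with a maximal sequence of transitions. For a notion of task: relentlessly enabled on a path = enabled in some state of every suffix; perpetually enabled = enabled in every state; a path $\pi$ is strongly (weakly) fair if for every suffix $\pi'$ each task relentlessly (perpetually) enabled on $\pi'$ is engaged in by $\pi'$. Components (SC/WC): tasks are locations $p$; enabled in $N$ if some transition $t$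 from $N$ has $p\in\mathrm{comp}(t)$; engaged in if the path contains such $t$. Actions (SA/WA): tasks are transition labels $\alpha$ (either $\tau$ or $(p,\lambda,q)$); enabled in $N$ if some transition labelled $\alpha$ leaves $N$; engaged in if the path contains a transition labelled $\alpha$. *)

(* Defs.v *)
From Stdlib Require Import List Arith.
Import ListNotations.

Definition loc := nat.
Definition lab := nat.
Definition var := nat.

(* Threads and thread states.  [TOut q l P] is the thread state <q!l>;P;
   [TSend] is internal choice (+)_{i in I} p_i!l_i;P_i and [TRecv] is the
   external choice Sum_{i in I} p_i?l_i;P_i, the index set I being
   represented by a list of branches. *)
Inductive thread : Type :=
| TEnd : thread
| TSend : list (loc * lab * thread) -> thread
| TRecv : list (loc * lab * thread) -> thread
| TVar : var -> thread
| TMu : var -> thread -> thread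
| TOut : loc -> lab -> thread -> thread.

(* Substitution P{Q/X} (used only with Q closed, so no capture issues). *)
Fixpoint subst (X : var) (Q : thread) (P : thread) : thread :=
  match P with
  | TEnd => TEnd
  | TSend bs => TSend (map (fun b => match b with (p, l, P') => (p, l, subst X Q P') end) bs)
  | TRecv bs => TRecv (map (fun b => match b with (p, l, P') => (p, l, subst X Q P') end) bs)
  | TVar Y => if Nat.eqb X Y then Q else TVar Y
  | TMu Y P' => if Nat.eqb X Y then TMu Y P' else TMu Y (subst X Q P')
  | TOut q l P' => TOut q l (subst X Q P')
  end.

Fixpoint closed_in (bound : list var) (P : thread) : Prop :=
  match P with
  | TEnd => True
  | TSend bs | TRecv bs =>
      (fix go (bs : list (loc * lab * thread)) : Prop :=
         match bs with
         | [] => True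
         | (_, _, P') :: bs' => closed_in bound P' /\ go bs'
         end) bs
  | TVar X => In X bound
  | TMu X P' => closed_in (X :: bound) P'
  | TOut _ _ P' => closed_in bound P'
  end.

Fixpoint unguarded (X : var) (P : thread) : Prop :=
  match P with
  | TVar Y => X = Y
  | TMu Y P' => Y <> X /\ unguarded X P'
  | _ => False
  end.

Fixpoint guarded_rec (P : thread) : Prop :=
  match P with
  | TEnd | TVar _ => True
  | TSend bs | TRecv bs =>
      (fix go (bs : list (loc * lab * thread)) : Prop :=
         match bs with
         | [] => True
         | (_, _, P') :: bs' => guarded_rec P' /\ go bs'
         end) bs
  | TMu X P' => ~ unguarded X P' /\ guarded_rec P'
  | TOut _ _ P' => guarded_rec P'
  end.

Fixpoint no_out (P : thread) : Prop :=
  match P with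
  | TEnd | TVar _ => True
  | TSend bs | TRecv bs =>
      (fix go (bs : list (loc * lab * thread)) : Prop :=
         match bs with
         | [] => True
         | (_, _, P') :: bs' => no_out P' /\ go bs'
         end) bs
  | TMu _ P' => no_out P'
  | TOut _ _ _ => False
  end.

Definition wf_thread (P : thread) : Prop :=
  no_out P /\ closed_in [] P /\ guarded_rec P.

Definition wf_state (S : thread) : Prop :=
  match S with
  | TOut _ _ P => wf_thread P
  | _ => wf_thread S
  end.

(* Networks p1[[S1]] || ... || pn[[Sn]] (modulo assoc./comm./unit) as lists. *)
Definition net := list (loc * thread).

Definition wf_net (N : net) : Prop :=
  NoDup (map fst N) /\ Forall (fun ps => wf_state (snd ps)) N.

Fixpoint upd {A : Type} (l : list A) (i : nat) (a : A) : list A :=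
  match l, i with
  | [], _ => []
  | _ :: l', 0 => a :: l'
  | x :: l', S i' => x :: upd l' i' a
  end.

Inductive trans : Type :=
| TrTau : loc -> trans
| TrComm : loc -> lab -> loc -> trans.

Inductive label : Type :=
| LTau : label
| LComm : loc -> lab -> loc -> label.

Definition lab_of (t : trans) : label :=
  match t with
  | TrTau _ => LTau
  | TrComm p l q => LComm p l q
  end.

Definition comp (t : trans) : list loc :=
  match t with
  | TrTau p => [p]
  | TrComm p _ q => [p; q]
  end.

Inductive step : net -> trans -> net -> Prop :=
| st_choice : forall N i p bs q l P,
    nth_error N i = Some (p, TSend bs) ->
    In (q, l, P) bs ->
    step N (TrTau p) (upd N i (p, TOut q l P))
| st_unfold : forall N i p X P,
    nth_error N i = Some (p, TMu X P) ->
    step N (TrTau p) (upd N i (p, subst X (TMu X P) P))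
| st_comm : forall N i j p q l Q bs P,
    i <> j ->
    nth_error N i = Some (p, TOut q l Q) ->
    nth_error N j = Some (q, TRecv bs) ->
    In (p, l, P) bs ->
    step N (TrComm p l q) (upd (upd N i (p, Q)) j (q, P)).

(* Paths: a network state with a maximal (finite or infinite) sequence of
   transitions.  [plen = Some n]: states pst 0 .. pst n and transitions
   ptr 0 .. ptr (n-1), with no transition leaving pst n.  [plen = None]:
   infinite path.  Values outside the range are irrelevant. *)
Record path : Type := mkPath {
  pst : nat -> net;
  ptr : nat -> trans;
  plen : option nat
}.

Definition st_in (π : path) (i : nat) : Prop :=
  match plen π with None => True | Some n => i <= n end.

Definition tr_in (π : path) (i : nat) : Prop :=
  match plen π with None => True | Some n => i < n end.

Definition is_path (π : path) : Prop :=
  wf_net (pst π 0) /\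
  (forall i, tr_in π i -> step (pst π i) (ptr π i) (pst π (S i))) /\
  (forall n, plen π = Some n -> forall t N', ~ step (pst π n) t N').

(* Generic fairness w.r.t. a notion of task.  Suffixes of π are indexed by
   their starting position k (with st_in π k). *)
Section Fairness.
Context {Task : Type} (enabled : net -> Task -> Prop) (engages : trans -> Task -> Prop).

Definition relentlessly_enabled (π : path) (k : nat) (T : Task) : Prop :=
  forall j, k <= j -> st_in π j -> exists i, j <= i /\ st_in π i /\ enabled (pst π i) T.

Definition perpetually_enabled (π : path) (k : nat) (T : Task) : Prop :=
  forall i, k <= i -> st_in π i -> enabled (pst π i) T.

Definition engaged_in (π : path) (k : nat) (T : Task) : Prop :=
  exists i, k <= i /\ tr_in π i /\ engages (ptr π i) T.

Definition strongly_fair (π : path) : Prop :=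
  forall k, st_in π k -> forall T, relentlessly_enabled π k T -> engaged_in π k T.

Definition weakly_fair (π : path) : Prop :=
  forall k, st_in π k -> forall T, perpetually_enabled π k T -> engaged_in π k T.
End Fairness.

Definition comp_enabled (N : net) (p : loc) : Prop :=
  exists t N', step N t N' /\ In p (comp t).
Definition comp_engages (t : trans) (p : loc) : Prop := In p (comp t).

Definition act_enabled (N : net) (a : label) : Prop :=
  exists t N', step N t N' /\ lab_of t = a.
Definition act_engages (t : trans) (a : label) : Prop := lab_of t = a.

Definition SC_fair := strongly_fair comp_enabled comp_engages.
Definition WC_fair := weakly_fair comp_enabled comp_engages.
Definition SA_fair := strongly_fair act_enabled act_engages.
Definition WA_fair := weakly_fair act_enabled act_engages.

(* Main.v *)
Require Import Defs.
From Stdlib Require Import List Arith Lia Classical.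
Import ListNotations.

Lemma nth_upd_same {A} (l : list A) i a x :
  nth_error l i = Some x -> nth_error (upd l i a) i = Some a.
Proof. revert i; induction l; intros [|i] H; simpl in *; try discriminate; auto. Qed.

Lemma nth_upd_other {A} (l : list A) i j a :
  i <> j -> nth_error (upd l i a) j = nth_error l j.
Proof.
  revert i j; induction l; intros [|i] [|j] H; simpl; auto; try lia.
  all: apply IHl; lia.
Qed.

Lemma map_fst_upd (N : net) i p x y :
  nth_error N i = Some (p, x) -> map fst (upd N i (p, y)) = map fst N.
Proof.
  revert i; induction N as [|[a b] N IH]; intros [|i] H; simpl in *; try discriminate.
  - inversion H; subst; reflexivity.
  - rewrite (IH i H); reflexivity.
Qed.

Lemma nth_fst {A B} (l : list (A * B)) i a b :
  nth_error l i = Some (a, b) -> nth_error (map fst l) i = Some a.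
Proof. intros H; rewrite nth_error_map, H; reflexivity. Qed.

Lemma nodup_idx (N : net) i j p x y :
  NoDup (map fst N) -> nth_error N i = Some (p, x) -> nth_error N j = Some (p, y) -> i = j.
Proof.
  intros ND Hi Hj. apply nth_fst in Hi; apply nth_fst in Hj.
  eapply NoDup_nth_error; eauto.
  - apply nth_error_Some; congruence.
  - congruence.
Qed.

Lemma nodup_step N t N' : step N t N' -> NoDup (map fst N) -> NoDup (map fst N').
Proof.
  intros H ND; destruct H.
  - erewrite map_fst_upd; eauto.
  - erewrite map_fst_upd; eauto.
  - erewrite map_fst_upd. erewrite map_fst_upd; eauto.
    rewrite nth_upd_other; eauto.
Qed.

Lemma preserve N t N' m p St :
  step N t N' -> ~ In p (comp t) -> nth_error N m = Some (p, St) -> nth_error N' m = Some (p, St).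
Proof.
  intros H Hn Hm; destruct H; simpl in Hn.
  - rewrite nth_upd_other; auto. intro; subst. rewrite H in Hm; inversion Hm; subst; tauto.
  - rewrite nth_upd_other; auto. intro; subst. rewrite H in Hm; inversion Hm; subst; tauto.
  - rewrite nth_upd_other. rewrite nth_upd_other; auto.
    + intro; subst. rewrite H0 in Hm; inversion Hm; subst; tauto.
    + intro; subst. rewrite H1 in Hm; inversion Hm; subst; tauto.
Qed.

Lemma label_comm N t N' m p q l Q :
  NoDup (map fst N) -> nth_error N m = Some (p, TOut q l Q) -> step N t N' -> In p (comp t) ->
  lab_of t = LComm p l q.
Proof.
  intros ND Hm H Hin; destruct H; simpl in Hin.
  - destruct Hin as [<-|[]]. pose proof (nodup_idx _ _ _ _ _ _ ND H Hm); subst; congruence.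
  - destruct Hin as [<-|[]]. pose proof (nodup_idx _ _ _ _ _ _ ND H Hm); subst; congruence.
  - destruct Hin as [<-|[<-|[]]].
    + pose proof (nodup_idx _ _ _ _ _ _ ND H0 Hm); subst. rewrite H0 in Hm; inversion Hm; subst. reflexivity.
    + pose proof (nodup_idx _ _ _ _ _ _ ND H1 Hm); subst; congruence.
Qed.

Lemma label_tau N t N' m p St :
  NoDup (map fst N) -> nth_error N m = Some (p, St) ->
  (match St with TSend _ | TMu _ _ => True | _ => False end) ->
  step N t N' -> In p (comp t) -> lab_of t = LTau.
Proof.
  intros ND Hm HS H Hin; destruct H; simpl in Hin; auto.
  destruct Hin as [<-|[<-|[]]].
  + pose proof (nodup_idx _ _ _ _ _ _ ND H0 Hm); subst. rewrite H0 in Hm; inversion Hm; subst. contradiction.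
  + pose proof (nodup_idx _ _ _ _ _ _ ND H1 Hm); subst. rewrite H1 in Hm; inversion Hm; subst. contradiction.
Qed.

Lemma st_in_le π i j : j <= i -> st_in π i -> st_in π j.
Proof. unfold st_in; destruct (plen π); auto; lia. Qed.

Lemma tr_st π i : tr_in π i -> st_in π (S i).
Proof. unfold st_in, tr_in; destruct (plen π); auto. Qed.

Lemma tr_st' π i : tr_in π i -> st_in π i.
Proof. unfold st_in, tr_in; destruct (plen π); auto; lia. Qed.

Lemma st_tr π i j : i < j -> st_in π j -> tr_in π i.
Proof. unfold st_in, tr_in; destruct (plen π); auto; lia. Qed.

Lemma nodup_path π : is_path π -> forall j, st_in π j -> NoDup (map fst (pst π j)).
Proof.
  intros [[ND _] [Hs _]]. induction j; intros H; auto.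
  apply (nodup_step (pst π j) (ptr π j)); [apply Hs; eapply st_tr; eauto|].
  apply IHj; eapply st_in_le; [|eauto]; lia.
Qed.

Lemma persist π i m p St : is_path π -> nth_error (pst π i) m = Some (p, St) ->
  forall j, i <= j -> st_in π j -> (forall k, i <= k < j -> ~ In p (comp (ptr π k))) ->
  nth_error (pst π j) m = Some (p, St).
Proof.
  intros HP Hm j. induction j; intros Hij Hj Hn.
  - replace i with 0 in Hm by lia; auto.
  - destruct (Nat.eq_dec i (S j)); [subst; auto|].
    destruct HP as [_ [Hs _]].
    apply (preserve (pst π j) (ptr π j)). apply Hs; eapply st_tr; eauto.
    apply Hn; lia.
    apply IHj; try lia. eapply st_in_le; [|eauto]; lia.
    intros; apply Hn; lia.
Qed.

Lemma min_ex (P : nat -> Prop) j : P j -> exists j0, P j0 /\ forall k, k < j0 -> ~ P k.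
Proof.
  induction j as [j IH] using (well_founded_induction lt_wf). intros Hj.
  destruct (classic (exists k, k < j /\ P k)) as [[k [Hk Pk]]|Hno].
  - exact (IH k Hk Pk).
  - exists j; split; auto. intros k Hk Pk; apply Hno; eauto.
Qed.

Lemma first_move π i m p St : is_path π -> st_in π i -> nth_error (pst π i) m = Some (p, St) ->
  (exists j, i <= j /\ tr_in π j /\ In p (comp (ptr π j))) ->
  exists j, i <= j /\ tr_in π j /\ step (pst π j) (ptr π j) (pst π (S j)) /\
    nth_error (pst π j) m = Some (p, St) /\ NoDup (map fst (pst π j)) /\ In p (comp (ptr π j)).
Proof.
  intros HP Hi Hm [j Hj].
  destruct (min_ex (fun j => i <= j /\ tr_in π j /\ In p (comp (ptr π j))) j Hj)
    as [j0 [[H1 [H2 H3]] Hmin]].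
  exists j0; repeat split; auto.
  - apply HP; auto.
  - apply (persist π i); auto. apply tr_st'; auto.
    intros k Hk Hin. apply (Hmin k); [lia|]. repeat split; auto; try lia.
    eapply st_tr with (j := j0); [lia| apply tr_st'; auto].
  - apply nodup_path; auto. apply tr_st'; auto.
Qed.

Lemma tau_case π i p : is_path π -> st_in π i -> step (pst π i) (TrTau p) (pst π i) \/ True -> True.
Proof. auto. Qed.

Lemma tau_key π i t N' : is_path π -> st_in π i -> step (pst π i) t N' -> lab_of t = LTau ->
  (exists j, i <= j /\ tr_in π j /\ lab_of (ptr π j) = LTau) \/
  exists p, (forall j, i <= j -> st_in π j -> comp_enabled (pst π j) p) /\
            ~ (exists j, i <= j /\ tr_in π j /\ In p (comp (ptr π j))).
Proof.
  intros HP Hi Hst Hl.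
  assert (exists m p St, nth_error (pst π i) m = Some (p, St) /\
            (match St with TSend _ | TMu _ _ => True | _ => False end) /\
            forall N, nth_error N m = Some (p, St) -> exists N', step N (TrTau p) N') as
      [m [p [St [Hm [HS Hen]]]]].
  { destruct Hst; simpl in Hl; try discriminate.
    - exists i0, p, (TSend bs); repeat split; auto. intros N0 HN; eexists; econstructor; eauto.
    - exists i0, p, (TMu X P); repeat split; auto. intros N0 HN; eexists; eapply st_unfold; eauto. }
  destruct (classic (exists j, i <= j /\ tr_in π j /\ In p (comp (ptr π j)))) as [E|NE].
  - left. destruct (first_move π i m p St HP Hi Hm E) as [j [H1 [H2 [H3 [H4 [H5 H6]]]]]].
    exists j; repeat split; auto. eapply label_tau; eauto.
  - right. exists p; split; auto. intros j Hj Hsj.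
    assert (nth_error (pst π j) m = Some (p, St)) as Hmj.
    { apply (persist π i); auto. intros k Hk Hin; apply NE.
      exists k; repeat split; try lia; auto. eapply st_tr; [|eauto]; lia. }
    destruct (Hen _ Hmj) as [N'' HN]. exists (TrTau p), N''; simpl; auto.
Qed.

Lemma comm_key π i p l q N' : is_path π -> st_in π i -> step (pst π i) (TrComm p l q) N' ->
  (exists j, i <= j /\ tr_in π j /\ In p (comp (ptr π j))) ->
  exists j, i <= j /\ tr_in π j /\ lab_of (ptr π j) = LComm p l q.
Proof.
  intros HP Hi Hst E. inversion Hst as [| |N0 i0 j0 p0 q0 l0 Q0 bs0 P0 Hne Hout Hrecv Hinb]; subst.
  destruct (first_move π i i0 p (TOut q l Q0) HP Hi Hout E) as [j [H1' [H2' [H3' [H4' [H5' H6']]]]]].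
  exists j; repeat split; auto. eapply label_comm; eauto.
Qed.

Theorem mainTheorem14 (π : path) :
  is_path π ->
  (SC_fair π -> SA_fair π) /\ (WC_fair π -> WA_fair π).
Proof.
  intros HP; split.
  - intros SC k Hk T Hrel.
    destruct (Hrel k (le_n k) Hk) as [i [Hki [Hi [t [N' [Hst Hl]]]]]].
    destruct t as [p | p l q]; simpl in Hl; subst T.
    + destruct (tau_key π i _ _ HP Hi Hst eq_refl) as [[j [? [? ?]]]|[p' [Pen NE]]].
      * exists j; repeat split; auto; lia.
      * exfalso; apply NE. apply SC; auto.
        intros j Hj Hsj; exists j; repeat split; auto.
    + destruct (comm_key π i p l q N' HP Hi Hst) as [j [? [? ?]]].
      * apply SC; auto. intros j Hj Hsj.
        destruct (Hrel j ltac:(lia) Hsj) as [i' [? [? [t' [N'' [Hs' Hl']]]]]].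
        exists i'; repeat split; auto. exists t', N''; split; auto.
        destruct t'; simpl in Hl'; inversion Hl'; subst; simpl; auto.
      * exists j; repeat split; auto; lia.
  - intros WC k Hk T Hper.
    destruct (Hper k (le_n k) Hk) as [t [N' [Hst Hl]]].
    destruct t as [p | p l q]; simpl in Hl; subst T.
    + destruct (tau_key π k _ _ HP Hk Hst eq_refl) as [[j [? [? ?]]]|[p' [Pen NE]]].
      * exists j; repeat split; auto.
      * exfalso; apply NE. apply WC; auto.
    + destruct (comm_key π k p l q N' HP Hk Hst) as [j [? [? ?]]].
      * apply WC; auto. intros j Hj Hsj.
        destruct (Hper j Hj Hsj) as [t' [N'' [Hs' Hl']]].
        exists t', N''; split; auto.
        destruct t'; simpl in Hl'; inversion Hl'; subst; simpl; auto.
      * exists j; repeat split; auto.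
Qed.
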